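(* Let $d\geq 2$ be even and $E,F\subset\mathbb F_q^d$. Then $$|\nu(0)|\leq q^{-1}|E||F|+2q^{d/2}|E|^{1/2}|F|^{1/2}.$$
   Context: $\mathbb F_q$ is a finite field with $q$ elements, of characteristic greater than two. For $m\in\mathbb F_q^d$, $\|m\|=m_1^2+\dots+m_d^2$, and $\nu(0)=|\{(x,y)\in E\times F:\|x-y\|=0\}|$. *)

(* Defs.v *)
From HB Require Import structures.
From mathcomp Require Import all_boot all_order all_algebra all_field.
Set Implicit Arguments. Unset Strict Implicit. Unset Printing Implicit Defensive.
Import Order.TTheory GRing.Theory Num.Theory.
Local Open Scope ring_scope.

Definition sqnorm (K : finFieldType) (d : nat) (m : 'rV[K]_d) : K :=
  \sum_(i < d) (m ord0 i) ^+ 2.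

Definition nu0 (K : finFieldType) (d : nat) (E F : {set 'rV[K]_d}) : nat :=
  #|[set p in setX E F | sqnorm (p.1 - p.2) == 0]|.

(* Main.v *)
Require Import Defs.
From HB Require Import structures.
From mathcomp Require Import all_boot all_order all_algebra all_field.
From mathcomp Require Import ring lra.
Import Order.TTheory GRing.Theory Num.Theory.
Local Open Scope ring_scope.




Lemma exists_psi (K : finFieldType) : exists psi : K -> algC,
  [/\ (forall a b, psi (a + b) = psi a * psi b), (forall a, `|psi a| = 1)
   & exists a, psi a != 1].
Proof.
have [p pr_p pch] := finPcharP K.
pose Rp := pPrimeCharType pch.
pose e := vbasis (fullv : {vspace Rp}).
have dimpos : (0 < \dim (fullv : {vspace Rp}))%N.
  rewrite lt0n dimv_eq0; apply/eqP => h.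
  have : (1 : Rp) \in (fullv : {vspace Rp}) by rewrite memvf.
  by rewrite h memv0 oner_eq0.
pose i0 := Ordinal dimpos.
pose f := coord e i0.
pose m := #|'F_p|.
have m2 : (1 < m)%N by rewrite /m card_Fp // prime_gt1.
have [w wprim] := C_prim_root_exists (ltnW m2).
exists (fun x => w ^+ (f x)); split.
- move=> a b. have h : f (a + b) = f a + f b by exact: raddfD.
  have hv (x y : 'F_p) : val (x + y) = ((val x + val y) %% m)%N.
    by rewrite /m card_Fp //=; congr modn; apply: Fp_cast.
  by rewrite h hv (prim_expr_mod wprim) exprD.
- have w1 : `|w| = 1.
    apply/eqP; rewrite -(pexpr_eq1 (ltnW m2)) ?normr_ge0 //.
    by rewrite -normrX (prim_expr_order wprim) normr1.
  by move=> a; rewrite normrX w1 expr1n.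
- exists (e`_i0 : Rp).
  have h : f e`_i0 = 1 by rewrite /f coord_free ?eqxx //; exact: basis_free (vbasisP _).
  rewrite h -(expr0 w) (eq_prim_root_expr wprim).
  have v1 : val (1 : 'F_p) = 1%N.
    by rewrite /= modn_small.
  by rewrite v1 mod0n modn_small.
Qed.

Lemma CSr (I : finType) (P : pred I) (a b : I -> algC) :
  (forall i, 0 <= a i) -> (forall i, 0 <= b i) ->
  (\sum_(i | P i) a i * b i) ^+ 2 <=
  (\sum_(i | P i) a i ^+ 2) * (\sum_(i | P i) b i ^+ 2).
Proof.
move=> a0 b0.
have key : 0 <= \sum_(i | P i) \sum_(j | P j) (a i * b j - a j * b i) ^+ 2.
  apply: sumr_ge0 => i _; apply: sumr_ge0 => j _.
  rewrite -realEsqr; apply: realB; apply: realM; apply: ger0_real => //.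
have e : \sum_(i | P i) \sum_(j | P j) (a i * b j - a j * b i) ^+ 2 =
  2 * ((\sum_(i | P i) a i ^+ 2) * (\sum_(i | P i) b i ^+ 2)
       - (\sum_(i | P i) a i * b i) ^+ 2).
  have e1 : forall i j, (a i * b j - a j * b i) ^+ 2 =
     a i ^+ 2 * b j ^+ 2 + a j ^+ 2 * b i ^+ 2 - 2 * ((a i * b i) * (a j * b j)).
    by move=> i j; ring.
  under eq_bigr do under eq_bigr do rewrite e1.
  under eq_bigr do rewrite sumrB big_split /=.
  rewrite sumrB big_split /=.
  have t1 : \sum_(i | P i) \sum_(j | P j) a i ^+ 2 * b j ^+ 2 =
            (\sum_(i | P i) a i ^+ 2) * (\sum_(i | P i) b i ^+ 2).
    by rewrite mulr_suml; apply: eq_bigr => i _; rewrite mulr_sumr.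
  have t2 : \sum_(i | P i) \sum_(j | P j) a j ^+ 2 * b i ^+ 2 =
            (\sum_(i | P i) a i ^+ 2) * (\sum_(i | P i) b i ^+ 2).
    by rewrite exchange_big /= -t1.
  have t3 : \sum_(i | P i) \sum_(j | P j) 2 * ((a i * b i) * (a j * b j)) =
            2 * (\sum_(i | P i) a i * b i) ^+ 2.
    rewrite expr2 mulr_suml mulr_sumr; apply: eq_bigr => i _.
    by rewrite mulr_sumr mulr_sumr; apply: eq_bigr => j _; rewrite mulrA.
  rewrite t1 t2 t3; ring.
move: key; rewrite e pmulr_rge0 ?ltr0n // subr_ge0 //.
Qed.

Lemma CS (I : finType) (P : pred I) (u v : I -> algC) :
  `|\sum_(i | P i) u i * v i| ^+ 2 <=
  (\sum_(i | P i) `|u i| ^+ 2) * (\sum_(i | P i) `|v i| ^+ 2).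
Proof.
have := @CSr I P (fun i => `|u i|) (fun i => `|v i|) (fun i => normr_ge0 (u i)) (fun i => normr_ge0 (v i)).
move=> /= h; apply: le_trans h.
apply: lerXn2r; rewrite ?nnegrE ?normr_ge0 ?sumr_ge0 //.
  by move=> i _; rewrite mulr_ge0.
apply: (le_trans (ler_norm_sum _ _ _)).
rewrite le_eqVlt; apply/orP; left; apply/eqP/eq_bigr => i _; by rewrite normrM.
Qed.

Section Psi.
Variables (K : finFieldType) (psi : K -> algC).
Hypothesis psiD : forall a b, psi (a + b) = psi a * psi b.
Hypothesis psiN : forall a, `|psi a| = 1.
Variable a0 : K.
Hypothesis psia0 : psi a0 != 1.

Lemma psi_neq0 a : psi a != 0.
Proof. by rewrite -normr_eq0 psiN oner_eq0. Qed.

Lemma psi0 : psi 0 = 1.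
Proof.
apply: (mulfI (psi_neq0 0)); by rewrite -psiD addr0 mulr1.
Qed.

Lemma psiNV a : psi (- a) = (psi a)^*.
Proof.
have h : psi (- a) * psi a = 1 by rewrite -psiD addNr psi0.
have : (psi a)^-1 = (psi a)^* by rewrite invC_norm psiN expr1n invr1 mul1r.
move=> <-; by rewrite -[LHS]mulr1 -(mulfV (psi_neq0 a)) mulrA h mul1r.
Qed.

Lemma sum_psi : \sum_a psi a = 0.
Proof.
have h : \sum_a psi a = (\sum_a psi a) * psi a0.
  rewrite {1}(reindex_inj (addIr a0)) /= mulr_suml.
  by apply: eq_bigr => a _; rewrite psiD.
move: h; set S := \sum_a psi a => h.
have : S * (psi a0 - 1) = 0 by rewrite mulrBr mulr1 -h subrr.
by move/eqP; rewrite mulf_eq0 subr_eq0 (negPf psia0) orbF => /eqP.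
Qed.

Lemma sum_psi_mul t : \sum_s psi (s * t) = (#|K| * (t == 0))%:R.
Proof.
have [-> | tnz] := eqVneq t 0.
  under eq_bigr do rewrite mulr0 psi0.
  by rewrite sumr_const muln1.
rewrite muln0 /=; transitivity (\sum_s psi s); last by rewrite sum_psi.
by rewrite [RHS](reindex_inj (mulIf tnz)).
Qed.

Variable d : nat.
Definition dot (x y : 'rV[K]_d) : K := \sum_i x 0 i * y 0 i.

Lemma dotDl x u z : dot (x + u) z = dot x z + dot u z.
Proof. by rewrite /dot -big_split; apply: eq_bigr => i _; rewrite mxE mulrDl. Qed.

Lemma dotBr x y z : dot x (y - z) = dot x y - dot x z.
Proof. by rewrite /dot -sumrB; apply: eq_bigr => i _; rewrite !mxE mulrBr. Qed.

Lemma dotx0 x : dot x 0 = 0.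
Proof. by rewrite /dot big1 // => i _; rewrite mxE mulr0. Qed.

Lemma sum_psi_dot c z : c != 0 ->
  \sum_(x : 'rV[K]_d) psi (c * dot x z) = ((#|K| ^ d) * (z == 0))%:R.
Proof.
move=> cnz; have [-> | znz] := eqVneq z 0.
  under eq_bigr do rewrite dotx0 mulr0 psi0.
  by rewrite sumr_const muln1 card_mx mul1n.
have [j zj] : exists j, z 0 j != 0.
  apply/existsP; apply: contraR znz => /existsPn h.
  apply/eqP/rowP => j; rewrite mxE; exact/eqP/negbNE/h.
pose u : 'rV[K]_d := \row_i (if i == j then a0 / (c * z 0 j) else 0).
have du : c * dot u z = a0.
  rewrite /dot (bigD1 j) //= big1 => [|i ij]; last by rewrite mxE (negPf ij) mul0r.
  rewrite mxE eqxx addr0; field; apply/andP; split => //.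
have h : \sum_(x : 'rV[K]_d) psi (c * dot x z) = (\sum_(x : 'rV[K]_d) psi (c * dot x z)) * psi a0.
  rewrite {1}(reindex_inj (addIr u)) /= mulr_suml.
  by apply: eq_bigr => x _; rewrite dotDl mulrDr psiD du.
move: h; set S := \sum_x _ => h.
have : S * (psi a0 - 1) = 0 by rewrite mulrBr mulr1 -h subrr.
by move/eqP; rewrite mulf_eq0 subr_eq0 (negPf psia0) orbF muln0 => /eqP.
Qed.

Lemma sqnormB (x y : 'rV[K]_d) : sqnorm (x - y) = sqnorm x + sqnorm y - 2 * dot x y.
Proof.
rewrite /sqnorm /dot mulr_sumr -big_split -sumrB /=; apply: eq_bigr => i _.
rewrite !mxE; ring.
Qed.

Hypothesis two_nz : (2 : K) != 0.

Lemma Wsum (F : {set 'rV[K]_d}) (s c : K) : c != 0 ->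
  \sum_(x : 'rV[K]_d) `|\sum_(y in F) psi (c * dot x y) * psi (s * sqnorm y)| ^+ 2
  = (#|K| ^ d * #|F|)%:R.
Proof.
move=> cnz.
have e1 x : `|\sum_(y in F) psi (c * dot x y) * psi (s * sqnorm y)| ^+ 2 =
   \sum_(y in F) \sum_(y' in F) psi (c * dot x (y - y')) *
      (psi (s * sqnorm y) * psi (- (s * sqnorm y'))).
  rewrite normCK rmorph_sum /= mulr_suml; apply: eq_bigr => y _.
  rewrite mulr_sumr; apply: eq_bigr => y' _.
  rewrite rmorphM /= -!psiNV -!psiD dotBr; congr psi; ring.
under eq_bigr do rewrite e1.
rewrite exchange_big /=.
under eq_bigr => y yF.
  rewrite exchange_big /=.
  under eq_bigr => y' _.
    rewrite -mulr_suml sum_psi_dot //.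
    over.
  rewrite /= (bigD1 y) //= big1 => [|y' /andP[_ ny]]; last first.
    by rewrite subr_eq0 eq_sym (negPf ny) muln0 mul0r.
  rewrite subrr eqxx muln1 addr0 -psiD addrN psi0 mulr1.
  over.
by rewrite /= sumr_const natrM mulr_natr.
Qed.

Lemma Tbound (E F : {set 'rV[K]_d}) s : s != 0 ->
  `|\sum_(x in E) \sum_(y in F) psi (s * sqnorm (x - y))| ^+ 2
   <= (#|K| ^ d * #|E| * #|F|)%:R.
Proof.
move=> snz; pose c := - (2 * s).
have cnz : c != 0 by rewrite oppr_eq0 mulf_neq0.
have eT : \sum_(x in E) \sum_(y in F) psi (s * sqnorm (x - y)) =
   \sum_(x in E) psi (s * sqnorm x) *
      (\sum_(y in F) psi (c * dot x y) * psi (s * sqnorm y)).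
  apply: eq_bigr => x _; rewrite mulr_sumr; apply: eq_bigr => y _.
  rewrite -!psiD sqnormB /c; congr psi; ring.
rewrite eT; apply: (le_trans (CS _ _ _ _)).
under eq_bigr do rewrite psiN expr1n.
rewrite sumr_const.
set w := fun x => \sum_(y in F) psi (c * dot x y) * psi (s * sqnorm y).
have h1 : \sum_(x in E) `|w x| ^+ 2 <= \sum_x `|w x| ^+ 2.
  rewrite [X in _ <= X](bigID (fun x => x \in E)) /= lerDl.
  by apply: sumr_ge0 => x _; apply: exprn_ge0.
rewrite /w Wsum // in h1.
apply: (le_trans (ler_wpM2l _ h1)); first exact: ler0n.
by rewrite -natrM mulnCA mulnA.
Qed.

Lemma nu0_eq (E F : {set 'rV[K]_d}) :
  ((#|K| * nu0 E F)%:R : algC) = (#|E| * #|F|)%:R +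
    \sum_(s | s != 0) \sum_(x in E) \sum_(y in F) psi (s * sqnorm (x - y)).
Proof.
have hn : ((nu0 E F)%:R : algC) =
    \sum_(x in E) \sum_(y in F) ((sqnorm (x - y) == 0)%:R : algC).
  rewrite /nu0 -sumr_const pair_big /= big_mkcond [RHS]big_mkcond /=.
  apply: eq_bigr => p _; rewrite !inE.
  by case: (p.1 \in E); case: (p.2 \in F); case: (sqnorm _ == 0).
transitivity (\sum_(x in E) \sum_(y in F) \sum_s psi (s * sqnorm (x - y))).
  rewrite natrM hn mulr_sumr; apply: eq_bigr => x _; rewrite mulr_sumr.
  by apply: eq_bigr => y _; rewrite sum_psi_mul natrM.
have e2 : forall x y : 'rV[K]_d, \sum_s psi (s * sqnorm (x - y)) =
   1 + \sum_(s | s != 0) psi (s * sqnorm (x - y)).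
  by move=> x y; rewrite (bigD1 0) //= mul0r psi0.
transitivity (\sum_(x in E) \sum_(y in F) (1 : algC) +
   \sum_(x in E) \sum_(y in F) \sum_(s | s != 0) psi (s * sqnorm (x - y))).
  rewrite -big_split; apply: eq_bigr => x _.
  rewrite -big_split; apply: eq_bigr => y _; exact: e2.
congr (_ + _).
  by rewrite sumr_const sumr_const -mulrnA mulnC.
transitivity (\sum_(x in E) \sum_(s | s != 0) \sum_(y in F)
   psi (s * sqnorm (x - y))).
  by apply: eq_bigr => x _; rewrite exchange_big.
by rewrite exchange_big.
Qed.

Lemma int_bound (E F : {set 'rV[K]_d}) :
  ((#|K| * nu0 E F)%:Z - (#|E| * #|F|)%:Z) ^+ 2
    <= ((#|K|.-1 ^ 2 * (#|K| ^ d * #|E| * #|F|))%:Z) :> int.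
Proof.
set z := (_ - _)%R.
set M : algC := (#|K| ^ d * #|E| * #|F|)%:R.
have M0 : 0 <= M by exact: ler0n.
have hz : (z%:~R : algC) = \sum_(s | s != 0) \sum_(x in E) \sum_(y in F)
   psi (s * sqnorm (x - y)).
  by rewrite /z rmorphB /= -!pmulrn nu0_eq addrAC subrr add0r.
have hT : forall s, s != 0 ->
   `|\sum_(x in E) \sum_(y in F) psi (s * sqnorm (x - y))| <= sqrtC M.
  move=> s snz; rewrite -(sqrCK (normr_ge0 _)) ler_sqrtC ?nnegrE ?exprn_ge0 //.
  exact: Tbound.
have hb : `|(z%:~R : algC)| <= #|K|.-1%:R * sqrtC M.
  rewrite hz; apply: (le_trans (ler_norm_sum _ _ _)).
  apply: (le_trans (ler_sum _ hT)).
  rewrite sumr_const.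
  have -> : #|(fun s : K => s != 0)| = #|K|.-1 by rewrite -(cardC1 (0 : K)).
  by rewrite mulr_natl.
have h2 : `|(z%:~R : algC)| ^+ 2 <= (#|K|.-1%:R * sqrtC M) ^+ 2.
  by apply: lerXn2r; rewrite ?nnegrE ?normr_ge0 ?mulr_ge0 ?ler0n ?sqrtC_ge0.
rewrite intr_normK ?rpred_int // exprMn sqrtCK -rmorphXn /= /M -natrX -natrM in h2.
by rewrite -(ler_int algC) -pmulrn.
Qed.
End Psi.

Theorem mainTheorem9 (K : finFieldType) (hK : 2%N \notin [pchar K])
    (d : nat) (hd2 : (2 <= d)%N) (hdeven : ~~ odd d)
    (E F : {set 'rV[K]_d}) (R : rcfType) :
  (nu0 E F)%:R <= (#|K|%:R)^-1 * #|E|%:R * #|F|%:R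
                  + 2 * (#|K| ^ d./2)%:R * Num.sqrt (#|E|%:R : R) * Num.sqrt (#|F|%:R : R).
Proof.
have two_nz : (2 : K) != 0.
  apply/negP => /eqP h; move/negP: hK; apply; rewrite inE /=.
  by rewrite h eqxx.
have [psi [psiD psiN [a0 psia0]]] := exists_psi K.
have hi := int_bound _ _ psiD psiN _ psia0 d two_nz E F.
rewrite -(ler_int R) rmorphXn /= rmorphB /= -!pmulrn in hi.
set q := #|K| in hi *.
set N := nu0 E F in hi *.
have q0 : (0 < q)%N by apply/card_gt0P; exists 0.
have q0R : (0 : R) < q%:R by rewrite ltr0n.
set Q : R := (q ^ d./2)%:R.
set sa : R := Num.sqrt #|E|%:R.
set sb : R := Num.sqrt #|F|%:R.
have sa0 : 0 <= sa by apply: sqrtr_ge0.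
have sb0 : 0 <= sb by apply: sqrtr_ge0.
have Q0 : 0 <= Q by apply: ler0n.
set P := Q * sa * sb.
have P0 : 0 <= P by rewrite mulr_ge0 // mulr_ge0.
have dd : d = (d./2 * 2)%N.
  by rewrite -[LHS](odd_double_half d) (negPf hdeven) add0n muln2.
have hM : ((q.-1 ^ 2 * (q ^ d * #|E| * #|F|))%:R : R) = (q.-1%:R * P) ^+ 2.
  rewrite /P /Q exprMn !exprMn /sa /sb !sqr_sqrtr ?ler0n // -!natrX.
  by rewrite -!natrM {1}dd expnM mulnA.
rewrite hM in hi.
have hX : (q * N)%:R - (#|E| * #|F|)%:R <= q.-1%:R * P :> R.
  apply: (le_trans (ler_norm _)).
  rewrite -(ler_pXn2r (isT : (0 < 2)%N)) ?nnegrE ?normr_ge0 ?mulr_ge0 ?ler0n //.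
  by rewrite real_normK ?realB ?realn.
have hq1 : (q.-1%:R : R) <= 2 * q%:R.
  rewrite -natrM ler_nat; apply: (leq_trans (leq_pred q)).
  by rewrite leq_pmull.
have hn : q%:R * N%:R <= #|E|%:R * #|F|%:R + 2 * q%:R * P :> R.
  have h2 : (q.-1%:R : R) * P <= 2 * q%:R * P by rewrite ler_wpM2r.
  rewrite !natrM in hX; lra.
have qi0 : (0 : R) <= q%:R^-1 by rewrite invr_ge0 ler0n.
have := ler_wpM2l qi0 hn.
have qnz : (q%:R : R) != 0 by rewrite pnatr_eq0 -lt0n.
rewrite mulKf // => h; apply: (le_trans h); rewrite le_eqVlt; apply/orP; left; apply/eqP.
by rewrite /P; field.
Qed.
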